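(* Let $X$ be a countable set. (i) If $\mathcal{A}\subseteq\mathcal{P}_\infty(X)$ is hereditary and $\mathcal{A}^\perp$ is bisequential, then $\mathcal{A}$ is an M-family. (ii) If $\mathcal{I}$ is a bisequential ideal on $X$, then $\mathcal{I}^\perp$ is an M-family.
   Context: $\mathcal{P}_\infty(X)$: infinite subsets of $X$. Hereditary: closed under infinite subsets. An ideal on $X$ is a hereditary family of infinite subsets of $X$ closed under finite unions. $\mathcal{A}^\perp=\{B\in\mathcal{P}_\infty(X):B\cap A\text{ finite }\forall A\in\mathcal{A}\}$. An M-family is a hereditary family $\mathcal{A}$ such that for every sequence $(A_n)_n$ in $\mathcal{A}$ there is $A\in\mathcal{A}$ with $A\setminus\bigcup_{i\ge n}A_i$ finite for every $n$. For an ultrafilter $p$ on $X$, $p^*=\{X\setminus A:A\in p\}$. An ideal $\mathcal{I}$ is bisequential if for every ultrafilter $p$ on $X$ with $\mathcal{I}\subseteq p^*$ there is a sequence $(B_n)_n$ in $p^*$ such that every $L\in\mathcal{I}$ satisfies $L\setminus B_n$ finite for some $n$. *)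

(* Defs.v *)
From Stdlib Require Import List Classical.
Import ListNotations.
Set Implicit Arguments.

Definition countable (X : Type) : Prop :=
  exists f : X -> nat, forall x y, f x = f y -> x = y.

Definition subset {X : Type} (A B : X -> Prop) : Prop := forall x, A x -> B x.

Definition finite {X : Type} (A : X -> Prop) : Prop :=
  exists l : list X, forall x, A x -> In x l.

Definition infinite {X : Type} (A : X -> Prop) : Prop := ~ finite A.

Definition family_of_infinite {X : Type} (F : (X -> Prop) -> Prop) : Prop :=
  forall A, F A -> infinite A.

Definition hereditary {X : Type} (F : (X -> Prop) -> Prop) : Prop :=
  family_of_infinite F /\
  (forall A B, F A -> infinite B -> subset B A -> F B).

Definition ideal {X : Type} (F : (X -> Prop) -> Prop) : Prop :=
  hereditary F /\
  (forall A B, F A -> F B -> F (fun x => A x \/ B x)).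

Definition perp {X : Type} (F : (X -> Prop) -> Prop) : (X -> Prop) -> Prop :=
  fun B => infinite B /\ forall A, F A -> finite (fun x => B x /\ A x).

Definition M_family {X : Type} (F : (X -> Prop) -> Prop) : Prop :=
  hereditary F /\
  forall An : nat -> (X -> Prop), (forall n, F (An n)) ->
    exists A, F A /\
      forall n, finite (fun x => A x /\ ~ (exists i, n <= i /\ An i x)).

Definition ultrafilter {X : Type} (p : (X -> Prop) -> Prop) : Prop :=
  p (fun _ => True) /\
  ~ p (fun _ => False) /\
  (forall A B, p A -> subset A B -> p B) /\
  (forall A B, p A -> p B -> p (fun x => A x /\ B x)) /\
  (forall A, p A \/ p (fun x => ~ A x)).

Definition dual_ideal {X : Type} (p : (X -> Prop) -> Prop) : (X -> Prop) -> Prop :=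
  fun B => exists A, p A /\ forall x, B x <-> ~ A x.

Definition bisequential {X : Type} (I : (X -> Prop) -> Prop) : Prop :=
  forall p, ultrafilter p -> subset I (dual_ideal p) ->
    exists Bn : nat -> (X -> Prop),
      (forall n, dual_ideal p (Bn n)) /\
      forall L, I L -> exists n, finite (fun x => L x /\ ~ Bn n x).

(* Main.v *)
Require Import Defs.
From Stdlib Require Import List Classical ClassicalEpsilon FunctionalExtensionality PropExtensionality Arith Lia.

Definition Fam (X : Type) := (X -> Prop) -> Prop.
Definition le {X} (G H : Fam X) := forall S, G S -> H S.
Definition filt {X} (G : Fam X) : Prop :=
  G (fun _ => True) /\ ~ G (fun _ => False) /\
  (forall A B, G A -> subset A B -> G B) /\
  (forall A B, G A -> G B -> G (fun x => A x /\ B x)).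

Definition ext {X} (G : Fam X) (s : X -> Prop) : Fam X :=
  fun T => exists A, G A /\ forall x, A x -> s x -> T x.

Definition gstep {X} (G : Fam X) : Fam X :=
  match excluded_middle_informative (exists s, ~ G s /\ ~ G (fun x => ~ s x)) with
  | left H => ext G (proj1_sig (constructive_indefinite_description _ H))
  | right _ => G
  end.

Definition chain {X} (C : Fam X -> Prop) := forall G H, C G -> C H -> le G H \/ le H G.
Definition sup {X} (F0 : Fam X) (C : Fam X -> Prop) : Fam X :=
  fun S => F0 S \/ exists G, C G /\ G S.

Inductive tower {X} (F0 : Fam X) : Fam X -> Prop :=
| tw_g G : tower F0 G -> tower F0 (gstep G)
| tw_sup (C : Fam X -> Prop) : (forall G, C G -> tower F0 G) -> chain C -> tower F0 (sup F0 C).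

Lemma le_gstep {X} (G : Fam X) : filt G -> le G (gstep G).
Proof.
  intros [H1 [H2 [H3 H4]]] S HS. unfold gstep.
  destruct excluded_middle_informative as [e|e]; [|exact HS].
  exists S; split; auto.
Qed.

Lemma gstep_filt {X} (G : Fam X) : filt G -> filt (gstep G).
Proof.
  intros HG. pose proof HG as [H1 [H2 [H3 H4]]]. unfold gstep.
  destruct excluded_middle_informative as [e|e]; [|exact HG].
  destruct (constructive_indefinite_description _ e) as [s [hs1 hs2]]; simpl.
  unfold ext; split; [|split; [|split]].
  - exists (fun _ => True); auto.
  - intros [A [HA HAs]]. apply hs2. apply (H3 A); [exact HA|]. intros x Ax sx. exact (HAs x Ax sx).
  - intros A B [A' [HA' HA's]] HAB. exists A'; split; [exact HA'|]. intros x a b; apply HAB; auto.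
  - intros A B [A' [HA' HA's]] [B' [HB' HB's]]. exists (fun x => A' x /\ B' x); split; auto.
    intros x [a b] c; split; auto.
Qed.

Lemma tower_props {X} (F0 : Fam X) : filt F0 -> forall G, tower F0 G -> le F0 G /\ filt G.
Proof.
  intros HF G T. induction T as [G T [IH1 IH2] | C HC IH Hch].
  - split. intros S HS; apply le_gstep; auto. apply gstep_filt; auto.
  - split. intros S HS; left; auto.
    destruct HF as [F1 [F2 [F3 F4]]].
    split; [|split; [|split]].
    + left; auto.
    + intros [h|[G [CG hG]]]; [auto|]. destruct (IH G CG) as [_ [_ [h2 _]]]; auto.
    + intros A B [h|[G [CG hG]]] hAB; [left; eauto|right; exists G; split; auto].
      destruct (IH G CG) as [_ [_ [_ [h3 _]]]]; eauto.
    + intros A B [h|[G [CG hG]]] [h'|[G' [CG' hG']]].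
      * left; auto.
      * right; exists G'; split; auto. destruct (IH G' CG') as [l [_ [_ [_ h4]]]]; auto.
      * right; exists G; split; auto. destruct (IH G CG) as [l [_ [_ [_ h4]]]]; auto.
      * destruct (Hch G G' CG CG') as [l|l].
        -- right; exists G'; split; auto. destruct (IH G' CG') as [_ [_ [_ [_ h4]]]]; auto.
        -- right; exists G; split; auto. destruct (IH G CG) as [_ [_ [_ [_ h4]]]]; auto.
Qed.

Lemma antisym {X} (G H : Fam X) : le G H -> le H G -> G = H.
Proof.
  intros a b. apply functional_extensionality; intro S.
  apply propositional_extensionality; split; auto.
Qed.

Lemma le_trans' {X} (A B C : Fam X) : le A B -> le B C -> le A C.
Proof. unfold le; auto. Qed.

Definition extreme {X} (F0 : Fam X) (c : Fam X) :=
  forall x, tower F0 x -> le x c -> le c x \/ le (gstep x) c.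

Lemma sup_le {X} (F0 : Fam X) C c : le F0 c -> (forall G, C G -> le G c) -> le (sup F0 C) c.
Proof. intros h1 h2 S [h|[G [CG hG]]]; eauto. apply (h2 G); auto. Qed.

Lemma comp_lemma {X} (F0 : Fam X) (HF : filt F0) c : tower F0 c -> extreme F0 c ->
  forall x, tower F0 x -> le x c \/ le (gstep c) x.
Proof.
  intros Tc Ec x Tx. induction Tx as [y Ty IH | C HC IH Hch].
  - destruct (tower_props F0 HF y Ty) as [_ fy].
    destruct IH as [h|h].
    + destruct (Ec y Ty h) as [h'|h']; auto.
      right. rewrite (antisym _ _ h h'). intros S; auto.
    + right. eapply le_trans'; [exact h|]. apply le_gstep; auto.
  - destruct (classic (exists G, C G /\ le (gstep c) G)) as [[G [CG hG]]|hn].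
    + right. intros S hS; right; exists G; split; auto.
    + left. apply sup_le. apply (tower_props F0 HF c Tc).
      intros G CG. destruct (IH G CG) as [h|h]; auto. exfalso; eauto.
Qed.

Lemma all_extreme {X} (F0 : Fam X) (HF : filt F0) c : tower F0 c -> extreme F0 c.
Proof.
  intros Tc. induction Tc as [d Td IH | C HC IH Hch].
  - intros x Tx hx. destruct (tower_props F0 HF d Td) as [_ fd].
    destruct (comp_lemma F0 HF d Td IH x Tx) as [h|h]; [|left; auto].
    destruct (IH x Tx h) as [h'|h'].
    + right. rewrite (antisym _ _ h h'). intros S; auto.
    + right. eapply le_trans'; [exact h'|]. apply le_gstep; auto.
  - intros x Tx hx.
    destruct (classic (forall G, C G -> le G x)) as [hall|hn].
    + left. apply sup_le; auto. apply (tower_props F0 HF x Tx).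
    + apply not_all_ex_not in hn as [G hn]. apply imply_to_and in hn as [CG hn].
      destruct (comp_lemma F0 HF G (HC G CG) (IH G CG) x Tx) as [h|h].
      * destruct (IH G CG x Tx h) as [h'|h']; [contradiction|].
        right. intros S hS; right; exists G; split; auto.
      * exfalso; apply hn. eapply le_trans'; [|exact h].
        apply le_gstep. apply (tower_props F0 HF G (HC G CG)).
Qed.

Lemma ultra_exists {X} (F0 : Fam X) : filt F0 -> exists p, ultrafilter p /\ le F0 p.
Proof.
  intros HF.
  assert (Hch : chain (tower F0)).
  { intros G H TG TH. destruct (comp_lemma F0 HF G TG (all_extreme F0 HF G TG) H TH) as [h|h]; auto.
    left. eapply le_trans'; [|exact h]. apply le_gstep. apply (tower_props F0 HF G TG). }
  set (M := sup F0 (tower F0)).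
  assert (TM : tower F0 M) by (apply tw_sup; auto).
  assert (Hg : le (gstep M) M) by (intros S hS; right; exists (gstep M); split; auto; apply tw_g; auto).
  destruct (tower_props F0 HF M TM) as [hF [U1 [U2 [U3 U4]]]].
  exists M; split; auto.
  repeat split; auto.
  intros A. apply NNPP; intro hn.
  assert (e : exists s, ~ M s /\ ~ M (fun x => ~ s x)).
  { exists A; split; intro h; apply hn; auto. }
  unfold gstep in Hg. destruct excluded_middle_informative as [e'|e']; [|contradiction].
  destruct (constructive_indefinite_description _ e') as [s [hs1 hs2]]; simpl in Hg.
  apply hs1, Hg. exists (fun _ => True); split; auto.
Qed.

Lemma fin_sub {X} (A B : X -> Prop) : finite B -> subset A B -> finite A.
Proof. intros [l hl] h; exists l; auto. Qed.

Lemma fin_union {X} (A B : X -> Prop) : finite A -> finite B -> finite (fun x => A x \/ B x).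
Proof. intros [l hl] [l' hl']; exists (l ++ l'); intros x [h|h]; apply in_or_app; auto. Qed.

Lemma fin_empty {X} : finite (fun _ : X => False).
Proof. exists nil; intros x []. Qed.

Lemma fin_prefix {X} (x : nat -> X) n : finite (fun y => exists m, m < n /\ y = x m).
Proof.
  exists (map x (seq 0 n)). intros y [m [hm ->]]. apply in_map, in_seq; lia.
Qed.

Lemma list_bound {X} (f : X -> nat) (l : list X) : exists M, forall y, In y l -> f y < M.
Proof.
  induction l as [|a l [M hM]]. exists 0; intros y [].
  exists (S (M + f a)). intros y [<-|h]; [lia|]. specialize (hM y h); lia.
Qed.

Lemma tail_inf {X} (f : X -> nat) (x : nat -> X) : (forall n, n <= f (x n)) ->
  forall n, ~ finite (fun y => exists m, n <= m /\ y = x m).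
Proof.
  intros hx n [l hl]. destruct (list_bound f l) as [M hM].
  assert (h : f (x (M + n)) < M).
  { apply hM, hl. exists (M + n); split; [lia|reflexivity]. }
  specialize (hx (M + n)); lia.
Qed.

Lemma fin_lt {X} (f : X -> nat) : (forall x y, f x = f y -> x = y) -> forall n, finite (fun x => f x < n).
Proof.
  intros finj n; induction n as [|n [l hl]].
  - exists nil; intros x h; lia.
  - destruct (classic (exists y, f y = n)) as [[y hy]|hn].
    + exists (y :: l). intros x hx. destruct (Nat.eq_dec (f x) n) as [e|e].
      * left. symmetry; apply finj; congruence.
      * right; apply hl; lia.
    + exists l. intros x hx. apply hl. destruct (Nat.eq_dec (f x) n) as [e|e]; [|lia].
      exfalso; eauto.
Qed.

Lemma build {X} (C : nat -> X -> Prop) (Cdec : forall n m x, n <= m -> C m x -> C n x)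
  (Q : (X -> Prop) -> Prop) (Qfin : forall E, finite E -> Q E)
  (Qun : forall K K', Q K -> Q K' -> Q (fun x => K x \/ K' x))
  (Hprop : forall n K, Q K -> ~ (forall x, C n x -> K x)) :
  exists p, ultrafilter p /\ (forall n, p (C n)) /\ (forall K, Q K -> p (fun x => ~ K x)).
Proof.
  set (F0 := fun S : X -> Prop => exists n K, Q K /\ forall x, C n x -> ~ K x -> S x).
  assert (HF : filt F0).
  { split; [|split; [|split]].
    - exists 0, (fun _ => False); split; auto. apply Qfin, fin_empty.
    - intros [n [K [hK h]]]. apply (Hprop n K hK). intros x hx. apply NNPP; intro; eapply h; eauto.
    - intros A B [n [K [hK h]]] hAB. exists n, K; split; auto.
    - intros A B [n [K [hK h]]] [n' [K' [hK' h']]]. exists (max n n'), (fun x => K x \/ K' x).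
      split; auto. intros x hx hn; split; [apply h|apply h']; try (apply (Cdec _ (max n n')); [lia|auto]); tauto. }
  destruct (ultra_exists F0 HF) as [p [hp hle]].
  exists p; split; auto. split.
  - intros n; apply hle. exists n, (fun _ => False); split; auto. apply Qfin, fin_empty.
  - intros K hK. apply hle. exists 0, K; split; auto.
Qed.

Lemma p_nonempty {X} (p : (X -> Prop) -> Prop) : ultrafilter p -> forall S, p S -> exists x, S x.
Proof.
  intros [u1 [u2 [u3 _]]] S hS. apply NNPP; intro hn. apply u2. apply (u3 S); auto.
  intros x hx; apply hn; eauto.
Qed.

Lemma seq_lemma {X} (f : X -> nat) (finj : forall x y, f x = f y -> x = y)
  (p : (X -> Prop) -> Prop) (hp : ultrafilter p) (C S : nat -> X -> Prop)
  (hC : forall n, p (C n)) (hS : forall n, p (S n))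
  (hcof : forall E, finite E -> p (fun x => ~ E x)) :
  exists x : nat -> X, forall n, C n (x n) /\ (forall k, k <= n -> S k (x n)) /\ n <= f (x n).
Proof.
  pose proof hp as [u1 [u2 [u3 [u4 u5]]]].
  assert (hI : forall n, p (fun y => forall k, k <= n -> S k y)).
  { induction n as [|n IH].
    - apply (u3 (S 0)); auto. intros y hy k hk. replace k with 0 by lia; auto.
    - apply (u3 _ _ (u4 _ _ IH (hS (Datatypes.S n)))). intros y [h1 h2] k hk.
      destruct (Nat.eq_dec k (Datatypes.S n)) as [->|e]; auto. apply h1; lia. }
  apply (choice (fun (n : nat) (y : X) => C n y /\ (forall k, k <= n -> S k y) /\ n <= f y)). intros n.
  destruct (p_nonempty p hp _ (u4 _ _ (u4 _ _ (hC n) (hI n)) (hcof _ (fin_lt f finj n))))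
    as [y [[h1 h2] h3]].
  exists y; split; auto. split; auto. lia.
Qed.

Lemma dual_choice {X} (p : (X -> Prop) -> Prop) (Bn : nat -> X -> Prop) :
  (forall n, dual_ideal p (Bn n)) ->
  exists S : nat -> X -> Prop, forall n, p (S n) /\ forall x, Bn n x <-> ~ S n x.
Proof. intros h. apply (choice (fun n T => p T /\ forall x, Bn n x <-> ~ T x)). exact h. Qed.

Lemma tail_prefix {X} (An : nat -> X -> Prop) (x : nat -> X) (A' : X -> Prop)
  (hx : forall n, exists i, n <= i /\ An i (x n)) (hA : forall y, A' y -> exists m, y = x m) :
  forall n, finite (fun y => A' y /\ ~ (exists i, n <= i /\ An i y)).
Proof.
  intros n. apply (fin_sub _ _ (fin_prefix x n)). intros y [h1 h2].
  destruct (hA y h1) as [m ->]. exists m; split; auto.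
  destruct (Nat.lt_ge_cases m n) as [l|l]; auto. exfalso; apply h2.
  destruct (hx m) as [i [hi hi']]. exists i; split; [lia|auto].
Qed.

Lemma part1 {X} (HX : countable X) (A : (X -> Prop) -> Prop) :
  hereditary A -> bisequential (perp A) -> M_family A.
Proof.
  intros hA hbis. split; auto. intros An hAn.
  destruct HX as [f finj].
  set (C := fun n x => exists i, n <= i /\ An i x).
  assert (Cdec : forall n m x, n <= m -> C m x -> C n x).
  { intros n m x h [i [hi hi']]; exists i; split; [lia|auto]. }
  set (Q := fun L : X -> Prop => perp A L \/ finite L).
  assert (Qfin : forall E, finite E -> Q E) by (intros; right; auto).
  assert (Qun : forall K K', Q K -> Q K' -> Q (fun x => K x \/ K' x)).
  { intros K K' [[i1 h1]|h1] [[i2 h2]|h2].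
    - left; split.
      + intro hf; apply i1; eapply fin_sub; [exact hf|]; intros y; auto.
      + intros A0 hA0. eapply fin_sub; [apply (fin_union _ _ (h1 A0 hA0) (h2 A0 hA0))|].
        intros y [[a|a] b]; auto.
    - left; split.
      + intro hf; apply i1; eapply fin_sub; [exact hf|]; intros y; auto.
      + intros A0 hA0. eapply fin_sub; [apply (fin_union _ _ (h1 A0 hA0) h2)|].
        intros y [[a|a] b]; auto.
    - left; split.
      + intro hf; apply i2; eapply fin_sub; [exact hf|]; intros y; auto.
      + intros A0 hA0. eapply fin_sub; [apply (fin_union _ _ h1 (h2 A0 hA0))|].
        intros y [[a|a] b]; auto.
    - right; apply fin_union; auto. }
  assert (Hprop : forall n K, Q K -> ~ (forall x, C n x -> K x)).
  { intros n K hK hsub. apply (proj1 hA (An n) (hAn n)).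
    destruct hK as [[_ hK]|hK].
    - eapply fin_sub; [apply (hK (An n) (hAn n))|]. intros y hy; split; auto.
      apply hsub. exists n; split; auto.
    - eapply fin_sub; [exact hK|]. intros y hy; apply hsub. exists n; split; auto. }
  destruct (build C Cdec Q Qfin Qun Hprop) as [p [hp [hpC hpQ]]].
  assert (hsub : subset (perp A) (dual_ideal p)).
  { intros L hL. exists (fun x => ~ L x); split. apply hpQ; left; auto.
    intros x; split; auto. apply NNPP. }
  destruct (hbis p hp hsub) as [Bn [hBn hcov]].
  destruct (dual_choice p Bn hBn) as [S hS].
  destruct (seq_lemma f finj p hp C S hpC (fun n => proj1 (hS n)) (fun E hE => hpQ E (Qfin E hE)))
    as [x hx].
  set (D := fun y => exists m, y = x m).
  assert (Dinf : infinite D).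
  { intros hf. apply (tail_inf f x (fun n => proj2 (proj2 (hx n))) 0).
    eapply fin_sub; [exact hf|]. intros y [m [_ ->]]; exists m; auto. }
  assert (nD : ~ perp A D).
  { intros hD. destruct (hcov D hD) as [n hn].
    apply (tail_inf f x (fun n => proj2 (proj2 (hx n))) n).
    eapply fin_sub; [exact hn|]. intros y [m [hm ->]]. split; [exists m; auto|].
    rewrite (proj2 (hS n)). intro h; apply h. apply (proj1 (proj2 (hx m))); auto. }
  assert (hex : exists A0, A A0 /\ ~ finite (fun y => D y /\ A0 y)).
  { apply NNPP; intro hn. apply nD. split; auto. intros A0 hA0.
    apply NNPP; intro h; apply hn; eauto. }
  destruct hex as [A0 [hA0 hinf]].
  exists (fun y => D y /\ A0 y). split.
  - apply (proj2 hA A0); auto. intros y [_ h]; auto.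
  - apply (tail_prefix An x). intros n; apply (proj1 (hx n)). intros y [h _]; auto.
Qed.

Lemma part2 {X} (HX : countable X) (I : (X -> Prop) -> Prop) :
  ideal I -> bisequential I -> M_family (perp I).
Proof.
  intros hI hbis. split.
  { split. intros L [h _]; auto.
    intros A0 B [i h] hB hBA. split; auto. intros K hK.
    eapply fin_sub; [apply (h K hK)|]. intros y [a b]; split; auto. }
  intros An hAn.
  destruct HX as [f finj].
  set (C := fun n x => exists i, n <= i /\ An i x).
  assert (Cdec : forall n m x, n <= m -> C m x -> C n x).
  { intros n m x h [i [hi hi']]; exists i; split; [lia|auto]. }
  set (Q := fun K : X -> Prop => exists K1 E, (I K1 \/ forall x, ~ K1 x) /\ finite E /\
              forall x, K x -> K1 x \/ E x).
  assert (Qfin : forall E, finite E -> Q E).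
  { intros E hE. exists (fun _ => False), E; split; [right; auto|split; auto]. }
  assert (QI : forall K, I K -> Q K).
  { intros K hK. exists K, (fun _ => False); split; [left; auto|split; [apply fin_empty|auto]]. }
  assert (Qun : forall K K', Q K -> Q K' -> Q (fun x => K x \/ K' x)).
  { intros K K' [K1 [E [h1 [h2 h3]]]] [K1' [E' [h1' [h2' h3']]]].
    exists (fun x => K1 x \/ K1' x), (fun x => E x \/ E' x). split; [|split].
    - destruct h1 as [h1|h1]; destruct h1' as [h1'|h1'].
      + left; apply (proj2 hI); auto.
      + left. eapply (proj2 (proj1 hI)); [exact h1| |].
        * intro hf; apply (proj1 (proj1 hI) K1 h1). eapply fin_sub; [exact hf|]; intros y; auto.
        * intros y [a|a]; auto. exfalso; eapply h1'; eauto.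
      + left. eapply (proj2 (proj1 hI)); [exact h1'| |].
        * intro hf; apply (proj1 (proj1 hI) K1' h1'). eapply fin_sub; [exact hf|]; intros y; auto.
        * intros y [a|a]; auto. exfalso; eapply h1; eauto.
      + right. intros x [a|a]; [eapply h1|eapply h1']; eauto.
    - apply fin_union; auto.
    - intros x [a|a]; [destruct (h3 x a)|destruct (h3' x a)]; tauto. }
  assert (Hprop : forall n K, Q K -> ~ (forall x, C n x -> K x)).
  { intros n K [K1 [E [h1 [h2 h3]]]] hsub. destruct (hAn n) as [hinf hperp].
    apply hinf.
    assert (hK1 : finite (fun x => An n x /\ K1 x)).
    { destruct h1 as [h1|h1]. apply hperp; auto. eapply fin_sub; [apply fin_empty|].
      intros y [_ b]; eapply h1; eauto. }
    eapply fin_sub; [apply (fin_union _ _ hK1 h2)|]. intros y hy.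
    assert (C n y) by (exists n; split; auto).
    destruct (h3 y (hsub y H)); auto. }
  destruct (build C Cdec Q Qfin Qun Hprop) as [p [hp [hpC hpQ]]].
  assert (hsub : subset I (dual_ideal p)).
  { intros L hL. exists (fun x => ~ L x); split. apply hpQ; auto.
    intros x; split; auto. apply NNPP. }
  destruct (hbis p hp hsub) as [Bn [hBn hcov]].
  destruct (dual_choice p Bn hBn) as [S hS].
  destruct (seq_lemma f finj p hp C S hpC (fun n => proj1 (hS n)) (fun E hE => hpQ E (Qfin E hE)))
    as [x hx].
  set (D := fun y => exists m, y = x m).
  assert (Dinf : infinite D).
  { intros hf. apply (tail_inf f x (fun n => proj2 (proj2 (hx n))) 0).
    eapply fin_sub; [exact hf|]. intros y [m [_ ->]]; exists m; auto. }
  exists D. split.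
  - split; auto. intros K hK. destruct (hcov K hK) as [n hn].
    eapply fin_sub; [apply (fin_union _ _ (fin_prefix x n) hn)|].
    intros y [[m ->] hy]. destruct (Nat.lt_ge_cases m n) as [l|l].
    + left; exists m; auto.
    + right; split; auto. rewrite (proj2 (hS n)). intro h; apply h.
      apply (proj1 (proj2 (hx m))); auto.
  - apply (tail_prefix An x). intros n; apply (proj1 (hx n)). intros y h; auto.
Qed.

Theorem proposition6 (X : Type) (HX : countable X) :
  (forall A : (X -> Prop) -> Prop,
      hereditary A -> bisequential (perp A) -> M_family A) /\
  (forall I : (X -> Prop) -> Prop,
      ideal I -> bisequential I -> M_family (perp I)).
Proof.
  split; intros; [apply part1|apply part2]; auto.
Qed.
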